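(* Let $(G,\mathcal{T},(A^\circ,B^\circ),k)$ be a Terminal Separation instance, let $\mathcal{T}'$ be the set of terminal pairs disjoint from $A^\circ\cup B^\circ$, and let $\{s,t\}\in\mathcal{T}'$. Let $\mathcal{F}$ be the family of all maximal terminal separations of minimum cost among terminal separations extending $(A^\circ\cup\{s\},B^\circ\cup\{t\})$, and suppose that no separation in $\mathcal{F}$ contains in the union of its two sides any terminal pair of $\mathcal{T}'$ other than $\{s,t\}$. Then there exists a unique maximal terminal separation $(A_s^{\max},B_t^{\min})$ such that $A_s^{\max}\supseteq A_s$ and $B_t^{\min}\subseteq B_t$ for every $(A_s,B_t)\in\mathcal{F}$. Moreover, if $A$ is a set with $A^\circ\cup\{s\}\subseteq A$, $A\cap B^\circ=\emptyset$, $A\cap\bigcup\mathcal{T}'\subseteq\{s\}$ and $A\setminus A_s^{\max}\ne\emptyset$, then $d(A)>d(A_s^{\max})$.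
   Context: Graphs may have multiple edges but no loops; $d(X)$ is the number of edges with exactly one endpoint in $X$. For a family $\mathcal{T}$ of pairwise disjoint vertex pairs (terminals are their vertices), a terminal separation is a pair $(A,B)$ of disjoint vertex sets such that each pair in $\mathcal{T}$ either has one vertex in $A$ and one in $B$ or is disjoint from $A\cup B$; $(A',B')$ extends $(A,B)$ if $A\subseteq A'$, $B\subseteq B'$; cost $c(A,B)=(d(A)+d(B))/2$; a terminal separation is maximal if every other terminal separation extending it has strictly larger cost. A Terminal Separation instance $(G,\mathcal{T},(A^\circ,B^\circ),k)$ has every terminal of degree at most one and $(A^\circ,B^\circ)$ a terminal separation. $\bigcup\mathcal{T}'$ denotes the set of all terminals of pairs in $\mathcal{T}'$. *)

(* Defs.v *)
From mathcomp Require Import all_boot all_order all_algebra.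
Set Implicit Arguments. Unset Strict Implicit. Unset Printing Implicit Defensive.
Import Order.TTheory GRing.Theory Num.Theory.

Section TermSep.
Variables (V E : finType) (ends : E -> V * V).

(* A multigraph on vertex set V with edge set E; edge e joins (ends e).1 and
   (ends e).2.  Loops are excluded. *)
Definition loopless := forall e : E, (ends e).1 != (ends e).2.

Definition incident (v : V) (e : E) := ((ends e).1 == v) || ((ends e).2 == v).

(* degree of a vertex (no loops, so each incident edge counts once) *)
Definition deg (v : V) : nat := #|[set e : E | incident v e]|.

Definition dcut (X : {set V}) : nat :=
  #|[set e : E | ((ends e).1 \in X) != ((ends e).2 \in X)]|.

Definition cost (A B : {set V}) : rat := ((dcut A + dcut B)%:R / 2%:R)%R.

Variable T : {set {set V}}.

Definition terminal_pairs :=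
  (forall p, p \in T -> #|p| = 2) /\
  (forall p q, p \in T -> q \in T -> p != q -> [disjoint p & q]).

Definition is_tsep (A B : {set V}) :=
  [disjoint A & B] /\
  forall p, p \in T ->
    (#|p :&: A| = 1 /\ #|p :&: B| = 1) \/ [disjoint p & A :|: B].

Definition extends (A B A' B' : {set V}) := A \subset A' /\ B \subset B'.

Definition maximal_tsep (A B : {set V}) :=
  is_tsep A B /\
  forall A' B', is_tsep A' B' -> extends A B A' B' -> (A', B') <> (A, B) ->
    (cost A B < cost A' B')%R.

Definition terminal_deg_le1 := forall v, v \in cover T -> deg v <= 1.

Definition Tprime (A0 B0 : {set V}) : {set {set V}} :=
  [set p in T | [disjoint p & A0 :|: B0]].

Definition inF (A0 B0 : {set V}) (s t : V) (A B : {set V}) :=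
  [/\ is_tsep A B,
      extends (A0 :|: [set s]) (B0 :|: [set t]) A B,
      (forall A' B', is_tsep A' B' ->
         extends (A0 :|: [set s]) (B0 :|: [set t]) A' B' ->
         (cost A B <= cost A' B')%R)
    & maximal_tsep A B].

End TermSep.

(* Main.v *)
Require Import Defs.
From mathcomp Require Import all_boot all_order all_algebra.
From mathcomp Require Import zify.
Import Order.TTheory GRing.Theory Num.Theory.
Set Implicit Arguments. Unset Strict Implicit. Unset Printing Implicit Defensive.

Lemma card_setE (E : finType) (P : pred E) : #|[set e | P e]| = \sum_e (P e : nat).
Proof.
rewrite -sum1_card big_mkcond /=; apply: eq_bigr => e _; rewrite inE; by case: (P e).
Qed.

Lemma dcut_sub (V E : finType) (ends : E -> V * V) (X Y : {set V}) :
  dcut ends (X :|: Y) + dcut ends (X :&: Y) <= dcut ends X + dcut ends Y.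
Proof.
rewrite /dcut !card_setE -!big_split /=; apply: leq_sum => e _; rewrite !inE.
case: ((ends e).1 \in X); case: ((ends e).2 \in X);
case: ((ends e).1 \in Y); case: ((ends e).2 \in Y) => //.
Qed.

Lemma dcutC (V E : finType) (ends : E -> V * V) (X : {set V}) :
  dcut ends (~: X) = dcut ends X.
Proof.
rewrite /dcut; apply: eq_card => e; rewrite !inE.
by case: ((ends e).1 \in X); case: ((ends e).2 \in X).
Qed.

Lemma cost_le (V E : finType) (ends : E -> V * V) A B A' B' :
  (cost ends A B <= cost ends A' B')%R = (dcut ends A + dcut ends B <= dcut ends A' + dcut ends B').
Proof. by rewrite /cost ler_pM2r ?invr_gt0 ?ltr0n // ler_nat. Qed.

Lemma cost_lt (V E : finType) (ends : E -> V * V) A B A' B' :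
  (cost ends A B < cost ends A' B')%R = (dcut ends A + dcut ends B < dcut ends A' + dcut ends B').
Proof. by rewrite /cost ltr_pM2r ?invr_gt0 ?ltr0n // ltr_nat. Qed.

Lemma pair_split (V : finType) (p X : {set V}) a b :
  p = [set a; b] -> a \in X -> b \notin X -> #|p :&: X| = 1.
Proof.
move=> -> aX bX; have -> : [set a; b] :&: X = [set a]; last by rewrite cards1.
apply/setP => x; rewrite !inE; have [->|xa] := eqVneq x a; first by rewrite aX.
by have [->|xb] := eqVneq x b; rewrite ?(negbTE bX) ?andbF.
Qed.

Lemma disjointP (T : finType) (A B : {set T}) : reflect (forall x, x \in A -> x \in B -> False) [disjoint A & B].
Proof.
rewrite disjoints_subset; apply: (iffP subsetP) => H x xA.
  by move=> xB; have := H x xA; rewrite inE xB.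
by rewrite inE; apply/negP => xB; exact: H x xA xB.
Qed.

Lemma split_sub (V : finType) (p A B : {set V}) :
  #|p| = 2 -> #|p :&: A| = 1 -> #|p :&: B| = 1 -> [disjoint A & B] -> p \subset A :|: B.
Proof.
move=> h2 hA hB dj.
have e : p :&: (A :|: B) = p.
  apply/eqP; rewrite eqEcard subsetIl h2 setIUr cardsU hA hB.
  have -> : p :&: A :&: (p :&: B) = set0.
    apply/setP => x; rewrite !inE; apply/negP => /andP [/andP [_ xA] /andP [_ xB]].
    by move/disjointP: dj => /(_ x xA xB).
  by rewrite cards0.
by rewrite -e subsetIr.
Qed.

Section Pf.
Variables (V E : finType) (ends : E -> V * V) (T : {set {set V}}) (A0 B0 : {set V}) (s t : V).
Hypotheses (HTp : terminal_pairs T) (HA0B0 : is_tsep T A0 B0)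
  (Hst : [set s; t] \in Tprime T A0 B0).
Hypothesis HF : forall A B, inF ends T A0 B0 s t A B ->
     forall p, p \in Tprime T A0 B0 -> p != [set s; t] -> ~~ (p \subset A :|: B).

Local Notation Tp := (Tprime T A0 B0).
Local Notation d := (dcut ends).

Definition good (X Y : {set V}) := [/\ A0 :|: [set s] \subset X, B0 :|: [set t] \subset Y, [disjoint X & Y],
   X :&: cover Tp \subset [set s] & Y :&: cover Tp \subset [set t]].

Lemma stT : [set s; t] \in T.
Proof. by move: Hst; rewrite inE => /andP []. Qed.

Lemma s_neq_t : s != t.
Proof.
case: HTp => h2 _; have := h2 _ stT; case: (eqVneq s t) => // ->.
by rewrite setUid cards1.
Qed.

Lemma in_cover x p : p \in Tp -> x \in p -> x \in cover Tp.
Proof. move=> pT xp; rewrite /cover; apply/bigcupP; by exists p. Qed.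

Lemma s_cov : s \in cover Tp.
Proof. by apply: (in_cover Hst); rewrite !inE eqxx. Qed.
Lemma t_cov : t \in cover Tp.
Proof. by apply: (in_cover Hst); rewrite !inE eqxx orbT. Qed.

Lemma good_tsep X Y : good X Y -> is_tsep T X Y.
Proof.
case => sX sY dXY cX cY; split => // p pT.
have [Hp2 Hdisj] := HTp.
have nXY : forall x, x \in X -> x \in Y -> False.
  by move=> x xX xY; move/disjointP: dXY => /(_ x xX xY).
case: (HA0B0) => _ /(_ p pT) [[h1 h2] | hd].
- move/eqP/cards1P: h1 => [a ea]; move/eqP/cards1P: h2 => [b eb].
  have aA : a \in A0 by have := set11 a; rewrite -ea inE => /andP [].
  have bB : b \in B0 by have := set11 b; rewrite -eb inE => /andP [].
  have ap : a \in p by have := set11 a; rewrite -ea inE => /andP [].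
  have bp : b \in p by have := set11 b; rewrite -eb inE => /andP [].
  have aX : a \in X by apply: (subsetP sX); rewrite inE aA.
  have bY : b \in Y by apply: (subsetP sY); rewrite inE bB.
  have ab : a != b by apply/eqP => eab; apply: (nXY a aX); rewrite eab.
  have ep : p = [set a; b].
    apply/eqP; rewrite eq_sym eqEcard Hp2 // cards2 ab /= andbT.
    by apply/subsetP => x; rewrite !inE => /orP [] /eqP ->.
  left; split.
    apply: (pair_split ep) => //.
    by apply/negP => bX; apply: (nXY b bX).
  rewrite ep setUC; apply: (pair_split (erefl _)) => //.
  by apply/negP => aY; apply: (nXY a aX).
- have pTp : p \in Tp by rewrite inE pT hd.
  have sX' : s \in X by apply: (subsetP sX); rewrite !inE eqxx orbT.
  have tY : t \in Y by apply: (subsetP sY); rewrite !inE eqxx orbT.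
  case: (eqVneq p [set s; t]) => [ep | pne].
    left; split.
      apply: (pair_split ep) => //.
      by apply/negP => tX; apply: (nXY t tX).
    rewrite ep setUC; apply: (pair_split (erefl _)) => //.
    by apply/negP => sY'; apply: (nXY s sX').
  right; apply/disjointP => x xp; rewrite inE => /orP [xZ | xZ].
  + have : x \in X :&: cover Tp by rewrite inE xZ (in_cover pTp xp).
    move/(subsetP cX); rewrite inE => /eqP exs; rewrite exs in xp.
    move/disjointP: (Hdisj _ _ pT stT pne) => /(_ s xp); rewrite !inE eqxx; by move/(_ isT).
  + have : x \in Y :&: cover Tp by rewrite inE xZ (in_cover pTp xp).
    move/(subsetP cY); rewrite inE => /eqP exs; rewrite exs in xp.
    move/disjointP: (Hdisj _ _ pT stT pne) => /(_ t xp); rewrite !inE eqxx orbT; by move/(_ isT).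
Qed.

Lemma F_good A B : inF ends T A0 B0 s t A B -> good A B.
Proof.
move=> hF; have [[dAB hsp] [sA sB] _ _] := hF.
have nAB : forall x, x \in A -> x \in B -> False.
  by move=> x xA xB; move/disjointP: dAB => /(_ x xA xB).
have sa : s \in A by apply: (subsetP sA); rewrite !inE eqxx orbT.
have tb : t \in B by apply: (subsetP sB); rewrite !inE eqxx orbT.
have cov : forall (Z : {set V}) (x : V), Z \subset A :|: B -> x \in Z -> x \in cover Tp ->
     x \in [set s; t].
  move=> Z x ZAB xZ; rewrite /cover => /bigcupP [p pTp xp].
  case: (eqVneq p [set s; t]) => [<- // | pne].
  have pT : p \in T by move: pTp; rewrite inE => /andP [].
  case: (hsp p pT) => [[h1 h2] | hd].
    have := HF hF pTp pne; rewrite split_sub //; by case: HTp => h _; apply: h.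
  by move/disjointP: hd => /(_ x xp (subsetP ZAB x xZ)).
split => //.
- apply/subsetP => x; rewrite in_setI => /andP [xA xc].
  have := cov A x (subsetUl _ _) xA xc; rewrite !inE => /orP [] // /eqP ext.
  by subst x; case: (nAB t xA tb).
- apply/subsetP => x; rewrite in_setI => /andP [xB xc].
  have := cov B x (subsetUr _ _) xB xc; rewrite !inE => /orP [] // /eqP exs.
  by subst x; case: (nAB s sa xB).
Qed.

Definition tsepb (X Y : {set V}) := [disjoint X & Y] &&
  [forall p in T, ((#|p :&: X| == 1) && (#|p :&: Y| == 1)) || [disjoint p & X :|: Y]].

Lemma tsepP X Y : reflect (is_tsep T X Y) (tsepb X Y).
Proof.
apply: (iffP andP) => [[dj /forall_inP H] | [dj H]]; split => //.
  move=> p pT; case/orP: (H p pT) => [/andP [/eqP h1 /eqP h2] | hd]; [left | right] => //.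
apply/forall_inP => p pT; case: (H p pT) => [[-> ->] | ->]; by rewrite ?eqxx ?orbT.
Qed.

Definition Eb (P : {set V} * {set V}) := tsepb P.1 P.2 &&
  (A0 :|: [set s] \subset P.1) && (B0 :|: [set t] \subset P.2).

Definition c (P : {set V} * {set V}) := d P.1 + d P.2.

Lemma good_Eb X Y : good X Y -> Eb (X, Y).
Proof.
move=> g; rewrite /Eb /=; have /tsepP -> := good_tsep g; by case: g => -> -> _ _ _.
Qed.

Lemma good_base : good (A0 :|: [set s]) (B0 :|: [set t]).
Proof.
have hst : [disjoint [set s; t] & A0 :|: B0] by move: Hst; rewrite inE => /andP [].
have sn : forall x, x \in [set s; t] -> x \in A0 :|: B0 -> False.
  by move=> x h1 h2; move/disjointP: hst => /(_ x h1 h2).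
have covn : forall x, x \in cover Tp -> x \in A0 :|: B0 -> False.
  move=> x; rewrite /cover => /bigcupP [p]; rewrite inE => /andP [_ hd] xp xab.
  by move/disjointP: hd => /(_ x xp xab).
have [dAB _] := HA0B0.
split => //.
- apply/disjointP => x; rewrite !inE => /orP [xa | /eqP ->] /orP [xb | /eqP e].
  + by move/disjointP: dAB => /(_ x xa xb).
  + by apply: (sn t); rewrite ?inE -?e ?xa ?eqxx ?orbT.
  + by apply: (sn s); rewrite ?inE ?xb ?eqxx ?orbT.
  + by move: s_neq_t; rewrite e eqxx.
- apply/subsetP => x; rewrite !inE => /andP [/orP [xa | ->] xc] //.
  by case: (covn x xc); rewrite inE xa.
- apply/subsetP => x; rewrite !inE => /andP [/orP [xa | ->] xc] //.
  by case: (covn x xc); rewrite inE xa orbT.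
Qed.

Definition Pm := [arg min_(P < (A0 :|: [set s], B0 :|: [set t]) | Eb P) c P].
Definition m := c Pm.

Lemma Pm_spec : Eb Pm /\ forall P, Eb P -> m <= c P.
Proof.
rewrite /m /Pm; case: arg_minnP; first exact: good_Eb good_base.
by move=> i Ei Hi; split.
Qed.

Lemma Eb_tsep P : Eb P -> [/\ is_tsep T P.1 P.2, A0 :|: [set s] \subset P.1 & B0 :|: [set t] \subset P.2].
Proof. by case/andP => /andP [/tsepP ? ?] ?. Qed.

Lemma tsep_Eb A B : is_tsep T A B -> extends (A0 :|: [set s]) (B0 :|: [set t]) A B -> Eb (A, B).
Proof. by move=> /tsepP h [h1 h2]; rewrite /Eb /= h h1 h2. Qed.

Lemma inF_c A B : inF ends T A0 B0 s t A B -> c (A, B) = m.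
Proof.
case=> hts hext hmin _; apply/eqP; rewrite eqn_leq; apply/andP; split.
  have [/Eb_tsep [h1 h2 h3] _] := Pm_spec.
  by have := hmin _ _ h1 (conj h2 h3); rewrite cost_le.
by apply: Pm_spec.2; apply: tsep_Eb.
Qed.

Lemma exF X : Eb X -> c X = m -> exists A B, inF ends T A0 B0 s t A B /\ X.1 \subset A /\ X.2 \subset B.
Proof.
move=> EX cX.
case: (@arg_maxnP _ X (fun R => Eb R && (X.1 \subset R.1) && (X.2 \subset R.2) && (c R == m))
                (fun R => #|R.1| + #|R.2|)); first by rewrite /= EX !subxx cX eqxx.
move=> [A B] /andP [/andP [/andP [EQ sA] sB] /eqP cQ] Hmax.
exists A, B; split => //.
have [ts sA0 sB0] := Eb_tsep EQ.
have minQ : forall A' B', is_tsep T A' B' -> extends (A0 :|: [set s]) (B0 :|: [set t]) A' B' ->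
   (cost ends A B <= cost ends A' B')%R.
  move=> A' B' h1 h2; rewrite cost_le; rewrite /c /= in cQ; rewrite cQ.
  exact: (Pm_spec.2 _ (tsep_Eb h1 h2)).
split => //; split => // A' B' h1 [h2 h3] hne.
rewrite cost_lt ltnNge; apply/negP => hle.
have E' : Eb (A', B') by apply: tsep_Eb => //; split; [apply: subset_trans sA0 h2 | apply: subset_trans sB0 h3].
have cm : c (A', B') = m.
  apply/eqP; rewrite eqn_leq (Pm_spec.2 _ E') andbT; rewrite /c /= in cQ; by rewrite /c /= -cQ.
have := Hmax (A', B'); rewrite E' cm eqxx (subset_trans sA h2) (subset_trans sB h3) /= => /(_ isT).
move=> hc; apply: hne.
have c1 := subset_leq_card h2; have c2 := subset_leq_card h3.
have e1 : A = A' by apply/eqP; rewrite eqEcard h2 /=; lia.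
have e2 : B = B' by apply/eqP; rewrite eqEcard h3 /=; lia.
by rewrite e1 e2.
Qed.

Lemma combo A1 B1 A2 B2 : good A1 B1 -> good A2 B2 -> c (A1, B1) = m -> c (A2, B2) = m ->
  [/\ good (A1 :|: A2) (B1 :&: B2), good (A1 :&: A2) (B1 :|: B2),
      c (A1 :|: A2, B1 :&: B2) = m & c (A1 :&: A2, B1 :|: B2) = m].
Proof.
move=> [a1 b1 d1 ca1 cb1] [a2 b2 d2 ca2 cb2] c1 c2.
have n1 : forall x, x \in A1 -> x \in B1 -> False.
  by move=> x xA xB; move/disjointP: d1 => /(_ x xA xB).
have n2 : forall x, x \in A2 -> x \in B2 -> False.
  by move=> x xA xB; move/disjointP: d2 => /(_ x xA xB).
have gU : good (A1 :|: A2) (B1 :&: B2).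
  split.
  - by apply: subset_trans a1 (subsetUl _ _).
  - by rewrite subsetI b1 b2.
  - apply/disjointP => x; rewrite !inE => /orP [] xa /andP [xb1 xb2]; [exact: n1 xa xb1 | exact: n2 xa xb2].
  - by rewrite setIUl subUset ca1 ca2.
  - by apply: subset_trans cb1; apply: setSI; apply: subsetIl.
have gI : good (A1 :&: A2) (B1 :|: B2).
  split.
  - by rewrite subsetI a1 a2.
  - by apply: subset_trans b1 (subsetUl _ _).
  - apply/disjointP => x; rewrite !inE => /andP [xa1 xa2] /orP [] xb; [exact: n1 xa1 xb | exact: n2 xa2 xb].
  - by apply: subset_trans ca1; apply: setSI; apply: subsetIl.
  - by rewrite setIUl subUset cb1 cb2.
have mU := Pm_spec.2 _ (good_Eb gU); have mI := Pm_spec.2 _ (good_Eb gI).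
have sA := dcut_sub ends A1 A2; have sB := dcut_sub ends B1 B2.
move: c1 c2 mU mI; rewrite /c /= => c1 c2 mU mI.
split => //; lia.
Qed.

Lemma Kl A1 B1 A2 B2 : inF ends T A0 B0 s t A1 B1 -> inF ends T A0 B0 s t A2 B2 ->
  A1 \subset A2 -> B2 \subset B1.
Proof.
move=> F1 F2 s12.
have [_ gI _ cI] := combo (F_good F1) (F_good F2) (inF_c F1) (inF_c F2).
move: gI cI; rewrite (setIidPl s12) => gI cI.
case: (eqVneq (A1, B1 :|: B2) (A1, B1)) => [[] e | ne].
  by rewrite -e subsetUr.
have [_ _ _ [_ hmax]] := F1.
have := hmax A1 (B1 :|: B2) (good_tsep gI) (conj (subxx _) (subsetUl _ _)) (fun h => negP ne (introT eqP h)).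
by rewrite cost_lt; move: cI (inF_c F1); rewrite /c /= => -> ->; rewrite ltnn.
Qed.

Lemma main_part : exists Aq Bq, inF ends T A0 B0 s t Aq Bq /\
  forall As Bt, inF ends T A0 B0 s t As Bt -> As \subset Aq /\ Bq \subset Bt.
Proof.
have [EPm _] := Pm_spec.
case: (@arg_maxnP _ Pm (fun R => Eb R && (c R == m)) (fun R => #|R.1|)); first by rewrite /= EPm eqxx.
move=> [Aa Ba] /andP [EPa /eqP cPa] Hmax.
have [Aq [Bq [Fq [sAa _]]]] := exF EPa cPa.
have maxA : forall R, Eb R -> c R = m -> #|R.1| <= #|Aq|.
  move=> R ER cR; apply: leq_trans (subset_leq_card sAa).
  by apply: Hmax; rewrite ER cR eqxx.
exists Aq, Bq; split => // As Bt F.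
have [gU _ cU _] := combo (F_good F) (F_good Fq) (inF_c F) (inF_c Fq).
have [A' [B' [F' [sU _]]]] := exF (good_Eb gU) cU.
have eA : A' = Aq.
  apply/eqP; rewrite eq_sym eqEcard (subset_trans (subsetUr _ _) sU) /=.
  have [ts' ex' _ _] := F'; exact: (maxA (A', B') (tsep_Eb ts' ex') (inF_c F')).
have sAs : As \subset Aq by rewrite -eA; apply: subset_trans sU; apply: subsetUl.
split => //; exact: Kl F Fq sAs.
Qed.

Lemma final_part :
  exists Amax Bmin : {set V},
    [/\ inF ends T A0 B0 s t Amax Bmin,
        maximal_tsep ends T Amax Bmin,
        (forall As Bt, inF ends T A0 B0 s t As Bt ->
           As \subset Amax /\ Bmin \subset Bt),
        (forall A' B', inF ends T A0 B0 s t A' B' ->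
           (forall As Bt, inF ends T A0 B0 s t As Bt ->
              As \subset A' /\ B' \subset Bt) ->
           A' = Amax /\ B' = Bmin)
      & (forall A : {set V},
           A0 :|: [set s] \subset A ->
           [disjoint A & B0] ->
           A :&: cover (Tprime T A0 B0) \subset [set s] ->
           A :\: Amax != set0 ->
           dcut ends Amax < dcut ends A)].
Proof.
have [Aq [Bq [Fq Hq]]] := main_part.
exists Aq, Bq; split => //.
- by case: Fq.
- move=> A' B' F' H'; have [h1 h2] := H' _ _ Fq; have [h3 h4] := Hq _ _ F'.
  by split; apply/eqP; rewrite eqEsubset ?h1 ?h2 ?h3 ?h4.
move=> A hA hAB0 hAC hAn.
have gq := F_good Fq.
have [sq1 sq2 dq cq1 cq2] := gq.
have nq : forall x, x \in Aq -> x \in Bq -> False.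
  by move=> x xA xB; move/disjointP: dq => /(_ x xA xB).
have tA : t \notin A.
  apply/negP => tA.
  have : t \in A :&: cover (Tprime T A0 B0) by rewrite inE tA t_cov.
  by move/(subsetP hAC); rewrite inE eq_sym (negbTE s_neq_t).
have gS : good (A :|: Aq) (Bq :\: A).
  split.
  - by apply: subset_trans hA (subsetUl _ _).
  - apply/subsetP => x hx; rewrite inE (subsetP sq2 x hx) andbT.
    move: hx; rewrite !inE => /orP [xb | /eqP -> //].
    by apply/negP => xa; move/disjointP: hAB0 => /(_ x xa xb).
  - apply/disjointP => x; rewrite !inE => /orP [] xa /andP [xna xb].
    + by rewrite xa in xna.
    + exact: nq xa xb.
  - by rewrite setIUl subUset hAC cq1.
  - by apply: subset_trans cq2; apply: setSI; apply: subsetDl.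
have gI : good (A :&: Aq) Bq.
  split => //.
  - by rewrite subsetI hA sq1.
  - apply/disjointP => x; rewrite inE => /andP [_ xa] xb; exact: nq xa xb.
  - by apply: subset_trans cq1; apply: setSI; apply: subsetIr.
have gD : good (A :\: Bq) Bq.
  split => //.
  - apply/subsetP => x hx; rewrite inE (subsetP hA x hx) andbT.
    by apply/negP => xb; apply: (nq x (subsetP sq1 x hx) xb).
  - apply/disjointP => x; rewrite inE => /andP [xnb _] xb; by rewrite xb in xnb.
  - by apply: subset_trans hAC; apply: setSI; apply: subsetDl.
have [_ mmin] := Pm_spec.
have cqm := inF_c Fq.
have cS : m < c (A :|: Aq, Bq :\: A).
  rewrite ltn_neqAle mmin ?good_Eb // andbT; apply/negP => /eqP ecS.
  have [A' [B' [F' [sU _]]]] := exF (good_Eb gS) (esym ecS).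
  have [hA' _] := Hq _ _ F'.
  move/negP: hAn; apply; rewrite setD_eq0.
  by apply: subset_trans (subset_trans sU hA'); apply: subsetUl.
have cI := mmin _ (good_Eb gI).
have cD := mmin _ (good_Eb gD).
have s1 := dcut_sub ends A Aq.
have s2 := dcut_sub ends A (~: Bq).
have e1 : A :|: ~: Bq = ~: (Bq :\: A) by rewrite setDE setCI setCK setUC.
rewrite e1 -setDE !dcutC in s2.
move: cS cI cD cqm s1 s2; rewrite /c /=.
move: (m) (d A) (d Aq) (d Bq) (d (A :|: Aq)) (d (A :&: Aq)) (d (Bq :\: A)) (d (A :\: Bq)).
clear; move=> mm a x y u i bd ad cS cI cD cqm s1 s2.
lia.
Qed.

End Pf.

Theorem lemma5p4 (V E : finType) (ends : E -> V * V) (T : {set {set V}})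
    (A0 B0 : {set V}) (k : nat) (s t : V) :
  loopless ends ->
  terminal_pairs T ->
  terminal_deg_le1 ends T ->
  is_tsep T A0 B0 ->
  [set s; t] \in Tprime T A0 B0 ->
  (forall A B, inF ends T A0 B0 s t A B ->
     forall p, p \in Tprime T A0 B0 -> p != [set s; t] ->
       ~~ (p \subset A :|: B)) ->
  exists Amax Bmin : {set V},
    [/\ inF ends T A0 B0 s t Amax Bmin,
        maximal_tsep ends T Amax Bmin,
        (forall As Bt, inF ends T A0 B0 s t As Bt ->
           As \subset Amax /\ Bmin \subset Bt),
        (forall A' B', inF ends T A0 B0 s t A' B' ->
           (forall As Bt, inF ends T A0 B0 s t As Bt ->
              As \subset A' /\ B' \subset Bt) ->
           A' = Amax /\ B' = Bmin)
      & (forall A : {set V},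
           A0 :|: [set s] \subset A ->
           [disjoint A & B0] ->
           A :&: cover (Tprime T A0 B0) \subset [set s] ->
           A :\: Amax != set0 ->
           dcut ends Amax < dcut ends A)].
Proof.
move=> _ HTp _ HA0B0 Hst HF.
exact: (final_part HTp HA0B0 Hst HF).
Qed.
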